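(* Let $g:\mathbb{R}\to\mathbb{R}$ be semi-convex (on $\mathbb{R}$) with a modulus $\omega$ such that $$\int_0^1\frac{\omega(t)}{t}\,dt<\infty.$$ Then there exists a separately convex function $f:\mathbb{R}^2\to\mathbb{R}$ such that $f(u,u)=g(u)$ for each $u\in\mathbb{R}$.
   Context: A function $f:\mathbb{R}^d\to\mathbb{R}$ is called separately convex if it is convex on every line parallel to a coordinate axis. A modulus is a non-decreasing function $\omega:[0,\infty)\to[0,\infty)$ with $\lim_{t\to0+}\omega(t)=0$. For a convex set $M$, a real function $g$ defined on a superset of $M$ is semi-convex with modulus $\omega$ on $M$ if $$g(\alpha x+(1-\alpha)y)\le \alpha g(x)+(1-\alpha)g(y)+\alpha(1-\alpha)\|x-y\|\,\omega(\|x-y\|)$$ for all $x,y\in M$ and all $\alpha\in(0,1)$. *)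

(* Defs.v *)
From HB Require Import structures.
From mathcomp Require Import all_boot all_order all_algebra.
From mathcomp Require Import all_classical all_reals all_analysis.
Set Implicit Arguments. Unset Strict Implicit. Unset Printing Implicit Defensive.
Import Order.TTheory GRing.Theory Num.Theory.
Import numFieldNormedType.Exports.
Local Open Scope classical_set_scope.
Local Open Scope ring_scope.

(* A modulus: omega : [0,oo) -> [0,oo), non-decreasing, omega t -> 0 as t -> 0+.
   Represented as a function R -> R; values at negative arguments are irrelevant. *)
Definition is_modulus (R : realType) (omega : R -> R) : Prop :=
  (forall t, 0 <= t -> 0 <= omega t) /\
  (forall s t, 0 <= s -> s <= t -> omega s <= omega t) /\
  (omega t @[t --> 0^'+] --> 0).

Definition semi_convex_R (R : realType) (omega g : R -> R) : Prop :=
  forall (x y a : R), 0 < a -> a < 1 ->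
    g (a * x + (1 - a) * y) <=
      a * g x + (1 - a) * g y + a * (1 - a) * `|x - y| * omega `|x - y|.

Definition convex_fun_R (R : realType) (h : R -> R) : Prop :=
  forall (x y a : R), 0 < a -> a < 1 ->
    h (a * x + (1 - a) * y) <= a * h x + (1 - a) * h y.

Definition separately_convex2 (R : realType) (f : R -> R -> R) : Prop :=
  (forall y, convex_fun_R (fun x => f x y)) /\
  (forall x, convex_fun_R (fun y => f x y)).

(* Main.v *)
Require Import Defs.
From HB Require Import structures.
From mathcomp Require Import all_boot all_order all_algebra.
From mathcomp Require Import all_classical all_reals all_analysis.
From mathcomp Require Import ring lra measurable_realfun.
Import Order.TTheory GRing.Theory Num.Theory.
Import numFieldNormedType.Exports.
Local Open Scope classical_set_scope.
Local Open Scope ring_scope.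


Definition rr (R : realType) (n : nat) : R := ((2:R) ^+ n)^-1.

Lemma rr_gt0 (R : realType) n : 0 < rr R n.
Proof. by rewrite /rr invr_gt0 exprn_gt0. Qed.

Lemma rrS (R : realType) n : rr R n.+1 = rr R n / 2.
Proof. by rewrite /rr exprS invfM mulrC. Qed.

Lemma rr0 (R : realType) : rr R 0 = 1.
Proof. by rewrite /rr expr0 invr1. Qed.

Lemma rr_le1 (R : realType) n : rr R n <= 1.
Proof.
elim: n => [|n IH]; first by rewrite rr0.
rewrite rrS; have := rr_gt0 R n; lra.
Qed.

Lemma dini (R : realType) (w : R -> R) : is_modulus w ->
  (\int[lebesgue_measure]_(t in `]0%R, 1%R]) ((w t / t)%:E) < +oo)%E ->
  exists S : R, forall N, \sum_(n < N) w (rr R n) <= S.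
Proof.
move=> [w0 [wmon _]] Ifin.
set F := fun t : R => (w t / t)%:E.
set I := (\int[lebesgue_measure]_(t in `]0%R, 1%R]) F t)%E.
have mI : measurable (`]0%R, 1%R] : set R) by exact: measurable_itv.
have mF : measurable_fun (`]0%R, 1%R] : set R) F.
  apply/measurable_EFinP; apply: measurable_funM.
    have mw' : measurable_fun (`]0%R, 1%R] : set R) (fun t => if t <= 0 then w 0 else w t).
      apply: nondecreasing_measurable => // s t st.
      case: ifPn => s0; case: ifPn => t0.
      - by [].
      - by apply: (wmon) => //; rewrite -ltNge in t0; apply: ltW.
      - by rewrite -ltNge in s0; exfalso; move: t0 s0 st; clear; move=> t0 s0 st; lra.
      - by apply: (wmon) => //; rewrite -ltNge in s0; apply: ltW.
    apply: eq_measurable_fun mw'.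
    move=> t; rewrite inE /= in_itv /= => /andP[t0 _].
    by rewrite leNgt t0.
  apply: (@measurable_funS _ _ _ _ (`]0%R, 2%R[ : set R)).
  - exact: measurable_itv.
  - by move=> t /=; rewrite !in_itv /= => /andP[-> ?]; lra.
  apply: open_continuous_measurable_fun; first exact: itv_open.
  move=> t; rewrite inE /= in_itv /= => /andP[t0 _].
  by apply: inv_continuous; rewrite gt_eqF.
have F0 : forall t : R, t \in `]0%R, 1%R] -> (0 <= F t)%E.
  move=> t /=; rewrite in_itv /= => /andP[t0 _]; rewrite lee_fin.
  by apply: divr_ge0; [apply: w0; lra| lra].
have key : forall N, ((\sum_(n < N) w (rr R n.+1) / 2)%:E <=
    \int[lebesgue_measure]_(t in `](rr R N), 1%R]) F t)%E.
  elim=> [|N IH].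
    rewrite big_ord0; apply: integral_ge0 => t; rewrite /= in_itv /= => /andP[t0 t1].
    by apply: F0; rewrite in_itv /=; rewrite rr0 in t0; apply/andP; split; lra.
  have rN := rr_gt0 R N; have rN1 := rr_le1 R N; have rS := rrS R N.
  have seq : `](rr R N.+1), 1%R]%classic = `](rr R N.+1), (rr R N)]%classic `|` `](rr R N), 1%R]%classic :> set R.
    apply/seteqP; split => t /=; rewrite !in_itv /=.
      move=> /andP[t0 t1]; case: (leP t (rr R N)) => tN.
        by left; apply/andP; split.
      by right; apply/andP; split.
    by case=> /andP[t0 t1]; apply/andP; split; lra.
  have sub1 : `](rr R N.+1), 1%R]%classic `<=` (`]0%R, 1%R]%classic : set R).
    by move=> t /=; rewrite !in_itv /= => /andP[t0 t1]; apply/andP; split; lra.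
  rewrite seq ge0_integral_setU //; first last.
  - by apply/disj_setPS => t [] /=; rewrite !in_itv /= => /andP[_ t1] /andP[t2 _]; have := lt_le_trans t2 t1; rewrite ltxx.
  - by move=> t tD; apply: F0; apply: sub1; rewrite seq.
  - by apply: (measurable_funS mI _ mF); rewrite -seq.
  rewrite big_ord_recr /= EFinD addeC; apply: leeD; last exact: IH.
  set c := w (rr R N.+1) / rr R N.
  apply: (@le_trans _ _ (\int[lebesgue_measure]_(t in `](rr R N.+1), (rr R N)]%classic) (cst c%:E) t)%E).
    rewrite integral_cst; last exact: measurable_itv.
    rewrite [X in (_ * X)%E]lebesgue_measure_itv /= lte_fin.
    have -> : (rr R N.+1 < rr R N) = true by apply/idP; lra.
    rewrite -EFinB -EFinM lee_fin /c rS.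
    have rN0 : rr R N != 0 by rewrite gt_eqF.
    suff -> : w (rr R N / 2) / rr R N * (rr R N - rr R N / 2) = w (rr R N / 2) / 2 by [].
    by field.
  apply: ge0_le_integral.
  - exact: measurable_itv.
  - by move=> t _; rewrite lee_fin /c; apply: divr_ge0; [apply: w0; have := rr_gt0 R N.+1; lra| lra].
  - exact: measurable_cst.
  - apply: (measurable_funS mI _ mF) => t; rewrite /= !in_itv /= => /andP[? ?]; apply/andP; split; lra.
  move=> t; rewrite /= in_itv /= => /andP[t0 t1]; rewrite lee_fin /c.
  have tp : 0 < t by have := rr_gt0 R N.+1; lra.
  have wa := w0 (rr R N.+1) (ltW (rr_gt0 R N.+1)).
  have wb := wmon (rr R N.+1) t (ltW (rr_gt0 R N.+1)) (ltW t0).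
  rewrite ler_pdivlMr // mulrAC ler_pdivrMr //.
  by nra.
have I0 : (0 <= I)%E by apply: integral_ge0.
have Ifn : I \is a fin_num by rewrite ge0_fin_numE.
exists (w 1 + 2 * fine I) => N.
have h1 : \sum_(n < N) w (rr R n.+1) / 2 <= fine I.
  rewrite -lee_fin fineK //; apply: (le_trans (key N)).
  apply: ge0_subset_integral => //.
  by move=> t; rewrite /= !in_itv /= => /andP[? ?]; apply/andP; split => //; have := rr_gt0 R N; lra.
rewrite -mulr_suml in h1.
apply: (@le_trans _ _ (\sum_(n < N.+1) w (rr R n))).
  rewrite big_ord_recr /= lerDl; apply: w0; exact: ltW (rr_gt0 R N).
rewrite big_ord_recl /= rr0 lerD2l.
set s := \sum_(i < N) _.
have -> : s = \sum_(n < N) w (rr R n.+1) by apply: eq_bigr => i _.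
lra.
Qed.


Section Kern.
Variable R : realType.

Definition TI (h D : R -> R) (S : R -> Prop) :=
  forall x z, S x -> S z -> h z + D z * (x - z) <= h x.

Lemma glue h D (S : R -> Prop) b : S b ->
  TI h D (fun x => S x /\ x <= b) -> TI h D (fun x => S x /\ b <= x) -> TI h D S.
Proof.
move=> Sb TL TR x z Sx Sz.
case: (leP x b) => xb; case: (leP z b) => zb.
- exact: TL.
-
  have h1 := TL x b (conj Sx xb) (conj Sb (lexx b)).
  have h2 := TR b z (conj Sb (lexx b)) (conj Sz (ltW zb)).
  have h3 := TR z b (conj Sz (ltW zb)) (conj Sb (lexx b)).
  have DD : D b <= D z.
    have : 0 <= (D z - D b) * (z - b) by nra.
    by rewrite pmulr_lge0 ?subr_gt0 // subr_ge0.
  nra.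
-
  have h1 := TR x b (conj Sx (ltW xb)) (conj Sb (lexx b)).
  have h2 := TL b z (conj Sb (lexx b)) (conj Sz zb).
  have h3 := TL z b (conj Sz zb) (conj Sb (lexx b)).
  have DD : D z <= D b.
    have [->|zb'] := eqVneq z b; first by [].
    have zlt : z < b by rewrite lt_neqAle zb' zb.
    have : 0 <= (D b - D z) * (b - z) by nra.
    by rewrite pmulr_lge0 ?subr_gt0 // subr_ge0.
  nra.
- exact: TR (conj Sx (ltW xb)) (conj Sz (ltW zb)).
Qed.

Lemma TI_convex h D : TI h D (fun _ => True) -> convex_fun_R h.
Proof.
move=> T x y a a0 a1.
set w := a * x + (1 - a) * y.
have h1 := T x w I I; have h2 := T y w I I.
have e : a * (x - w) + (1 - a) * (y - w) = 0 by rewrite /w; ring.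
have k1 : a * (h w + D w * (x - w)) <= a * h x by rewrite ler_pM2l.
have k2 : (1 - a) * (h w + D w * (y - w)) <= (1 - a) * h y by rewrite ler_pM2l // subr_gt0.
have e' : a * (D w * (x - w)) + (1 - a) * (D w * (y - w)) = 0.
  by rewrite mulrCA [X in _ + X]mulrCA -mulrDr e mulr0.
rewrite !mulrDr in k1 k2; lra.
Qed.

Definition mm (t : R) : R :=
  if t <= -3 then 0 else if t <= -(3/2) then -((3+t)^+2)/6
  else if t <= 0 then t + t^+2/2 else if t <= 3/2 then t - t^+2/2
  else if t <= 3 then (3-t)^+2/6 else 0.

Definition dm (t : R) : R :=
  if t <= -3 then 0 else if t <= -(3/2) then -(3+t)/3
  else if t <= 0 then 1 + t else if t <= 3/2 then 1 - t
  else if t <= 3 then -(3-t)/3 else 0.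

Ltac negle := repeat match goal with H : is_true (~~ (_ <= _)) |- _ => rewrite -ltNge in H end.

Ltac pw := rewrite /mm /dm; repeat (case: ifPn => ?); negle; try (exfalso; lra); try nra.

Lemma mm1 t : t <= -3 -> mm t = 0 /\ dm t = 0.
Proof. move=> ?; split; pw. Qed.
Lemma mm2 t : -3 <= t <= -(3/2) -> mm t = -((3+t)^+2)/6 /\ dm t = -(3+t)/3.
Proof. move=> /andP[? ?]; split; pw. Qed.
Lemma mm3 t : -(3/2) <= t <= 0 -> mm t = t + t^+2/2 /\ dm t = 1 + t.
Proof. move=> /andP[? ?]; split; pw. Qed.
Lemma mm4 t : 0 <= t <= 3/2 -> mm t = t - t^+2/2 /\ dm t = 1 - t.
Proof. move=> /andP[? ?]; split; pw. Qed.
Lemma mm5 t : 3/2 <= t <= 3 -> mm t = (3-t)^+2/6 /\ dm t = -(3-t)/3.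
Proof. move=> /andP[? ?]; split; pw. Qed.
Lemma mm6 t : 3 <= t -> mm t = 0 /\ dm t = 0.
Proof. move=> ?; split; pw. Qed.


Ltac dconj := repeat match goal with H : _ /\ _ |- _ => destruct H end.
Ltac piece L := let x := fresh "x" in let z := fresh "z" in
  move=> x z /= ? ?; dconj;
  rewrite (proj1 (L x ltac:(try (apply/andP; split); lra)))
    (proj1 (L z ltac:(try (apply/andP; split); lra)))
    (proj2 (L z ltac:(try (apply/andP; split); lra))); have := sqr_ge0 (x - z); nra.

Lemma TI_glue6 (h D : R -> R) :
  TI h D (fun x => True /\ x <= -3) ->
  TI h D (fun x => (True /\ -3 <= x) /\ x <= -(3/2)) ->
  TI h D (fun x => ((True /\ -3 <= x) /\ -(3/2) <= x) /\ x <= 0) ->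
  TI h D (fun x => (((True /\ -3 <= x) /\ -(3/2) <= x) /\ 0 <= x) /\ x <= 3/2) ->
  TI h D (fun x => ((((True /\ -3 <= x) /\ -(3/2) <= x) /\ 0 <= x) /\ 3/2 <= x) /\ x <= 3) ->
  TI h D (fun x => ((((True /\ -3 <= x) /\ -(3/2) <= x) /\ 0 <= x) /\ 3/2 <= x) /\ 3 <= x) ->
  TI h D (fun _ => True).
Proof.
move=> T1 T2 T3 T4 T5 T6.
apply: (@glue h D _ (-3)); [done | exact: T1 | ].
apply: (@glue h D _ (-(3/2))); [repeat split; lra | exact: T2 | ].
apply: (@glue h D _ 0); [repeat split; lra | exact: T3 | ].
apply: (@glue h D _ (3/2)); [repeat split; lra | exact: T4 | ].
apply: (@glue h D _ 3); [repeat split; lra | exact: T5 | exact: T6].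
Qed.

Lemma TI_mp : TI (fun t => mm t + t^+2/2) (fun t => dm t + t) (fun _ => True).
Proof.
apply: TI_glue6.
- piece mm1.
- piece mm2.
- piece mm3.
- piece mm4.
- piece mm5.
- piece mm6.
Qed.

Lemma TI_mn : TI (fun t => t^+2/2 - mm t) (fun t => t - dm t) (fun _ => True).
Proof.
apply: TI_glue6.
- piece mm1.
- piece mm2.
- piece mm3.
- piece mm4.
- piece mm5.
- piece mm6.
Qed.


Definition bt (d : R) : R := if d <= -6 then -3*d - 9 else if d <= 6 then d^+2/4 else 3*d - 9.
Definition dbt (d : R) : R := if d <= -6 then -3 else if d <= 6 then d/2 else 3.

Ltac pwb := rewrite /bt /dbt; repeat (case: ifPn => ?); negle; try (exfalso; lra); try nra.

Lemma bt1 d : d <= -6 -> bt d = -3*d - 9 /\ dbt d = -3.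
Proof. move=> ?; split; pwb. Qed.
Lemma bt2 d : -6 <= d <= 6 -> bt d = d^+2/4 /\ dbt d = d/2.
Proof. move=> /andP[? ?]; split; pwb. Qed.
Lemma bt3 d : 6 <= d -> bt d = 3*d - 9 /\ dbt d = 3.
Proof. move=> ?; split; pwb. Qed.

Lemma TI_bt : TI bt dbt (fun _ => True).
Proof.
apply: (@glue _ _ _ (-6)); [done | piece bt1 | ].
apply: (@glue _ _ _ 6); [repeat split; lra | piece bt2 | piece bt3].
Qed.

Lemma bt_even d : bt (- d) = bt d.
Proof.
case: (lerP d (-6)) => h1.
  by rewrite (proj1 (@bt1 d h1)) (proj1 (@bt3 (-d) ltac:(lra))); lra.
case: (lerP d 6) => h2.
  by rewrite (proj1 (@bt2 (d) ltac:(apply/andP; split; lra))) (proj1 (@bt2 (-d) ltac:(apply/andP; split; lra))); rewrite sqrrN.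
by rewrite (proj1 (@bt3 (d) ltac:(lra))) (proj1 (@bt1 (-d) ltac:(lra))); lra.
Qed.

Lemma bt0 : bt 0 = 0.
Proof. by rewrite (proj1 (@bt2 (0) ltac:(apply/andP; split; lra))) expr0n /= mul0r. Qed.

Lemma bt_le d : bt d <= 3 * `|d|.
Proof.
case: (lerP 0 d) => h0; [rewrite ger0_norm // | rewrite ltr0_norm //].
  case: (lerP d 6) => h2.
    by rewrite (proj1 (@bt2 (d) ltac:(apply/andP; split; lra))); nra.
  by rewrite (proj1 (@bt3 (d) ltac:(lra))); lra.
case: (lerP d (-6)) => h2.
  by rewrite (proj1 (@bt1 (d) ltac:(lra))); lra.
by rewrite (proj1 (@bt2 (d) ltac:(apply/andP; split; lra))); nra.
Qed.

Lemma mm_bnd t : -(1/2) <= mm t <= 1/2 /\ -1 <= dm t <= 1.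
Proof. split; apply/andP; split; pw; have := sqr_ge0 (t+1); have := sqr_ge0 (t-1); nra. Qed.

Lemma mm0 : mm 0 = 0.
Proof. by rewrite (proj1 (@mm4 (0) ltac:(apply/andP; split; lra))); rewrite expr0n /=; lra. Qed.

Lemma mm_sq s : -1 <= s <= 1 -> s^+2/4 <= mm s ^+ 2.
Proof.
move=> /andP[h1 h2]; case: (lerP 0 s) => h0.
  rewrite (proj1 (@mm4 (s) ltac:(apply/andP; split; lra))).
  have : 0 <= s^+2 * ((1 - s) * (3 - s)) by apply: mulr_ge0; [exact: sqr_ge0| apply: mulr_ge0; lra].
  nra.
rewrite (proj1 (@mm3 (s) ltac:(apply/andP; split; lra))).
have : 0 <= s^+2 * ((1 + s) * (3 + s)) by apply: mulr_ge0; [exact: sqr_ge0| apply: mulr_ge0; lra].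
nra.
Qed.

Lemma mm_out t : mm t != 0 -> -3 < t < 3.
Proof.
move=> h; apply/andP; split.
  by rewrite ltNge; apply/negP => /mm1 [e _]; move: h; rewrite e eqxx.
by rewrite ltNge; apply/negP => /mm6 [e _]; move: h; rewrite e eqxx.
Qed.

Lemma Bm_bnd x z : -((x - z)^+2/2) <= mm x - mm z - dm z * (x - z) <= (x - z)^+2/2.
Proof.
have h1 := TI_mp x z I I; have h2 := TI_mn x z I I; simpl in h1, h2.
apply/andP; split; nra.
Qed.


Definition sg (x y : R) := - (mm x * mm y) + bt (x - y).
Definition Dsg (x y : R) := - (dm x * mm y) + dbt (x - y).

Lemma sg_TI y : TI (fun x => sg x y) (fun x => Dsg x y) (fun _ => True).
Proof.
case: (eqVneq (mm y) 0) => [c0|c0].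
  move=> x z _ _; rewrite /sg /Dsg c0 !mulr0 oppr0 !add0r.
  have e : x - y - (z - y) = x - z by ring.
  by have := TI_bt (x - y) (z - y) I I; rewrite e.
have /andP[hy1 hy2] := @mm_out y c0.
have [/andP[hc1 hc2] _] := @mm_bnd y.
apply: (@glue _ _ _ (y - 6)); [done | | ].
  move=> x z /= [_ hx] [_ hz]; rewrite /sg /Dsg.
  rewrite (proj1 (@mm1 x ltac:(lra))) (proj1 (@mm1 z ltac:(lra))) (proj2 (@mm1 z ltac:(lra))).
  rewrite (proj1 (@bt1 (x-y) ltac:(lra))) (proj1 (@bt1 (z-y) ltac:(lra))) (proj2 (@bt1 (z-y) ltac:(lra))).
  lra.
apply: (@glue _ _ _ (y + 6)); [repeat split; lra | | ].
  move=> x z /= [[_ hx1] hx2] [[_ hz1] hz2]; rewrite /sg /Dsg.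
  rewrite (proj1 (@bt2 (x-y) ltac:(apply/andP; split; lra))) (proj1 (@bt2 (z-y) ltac:(apply/andP; split; lra))) (proj2 (@bt2 (z-y) ltac:(apply/andP; split; lra))).
  have /andP[b1 b2] := Bm_bnd x z.
  set B := mm x - mm z - dm z * (x - z) in b1 b2.
  set c := mm y in hc1 hc2 *.
  have p1 : 0 <= (1/2 - c) * ((x - z)^+2/2 + B) by apply: mulr_ge0; lra.
  have p2 : 0 <= (1/2 + c) * ((x - z)^+2/2 - B) by apply: mulr_ge0; lra.
  have eB : mm x = B + mm z + dm z * (x - z) by rewrite /B; ring.
  rewrite eB; nra.
move=> x z /= [[_ hx1] hx2] [[_ hz1] hz2]; rewrite /sg /Dsg.
rewrite (proj1 (@mm6 x ltac:(lra))) (proj1 (@mm6 z ltac:(lra))) (proj2 (@mm6 z ltac:(lra))).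
rewrite (proj1 (@bt3 (x-y) ltac:(lra))) (proj1 (@bt3 (z-y) ltac:(lra))) (proj2 (@bt3 (z-y) ltac:(lra))).
lra.
Qed.

Lemma sg_convex y : convex_fun_R (fun x => sg x y).
Proof. exact: TI_convex (sg_TI y). Qed.

Lemma sg_sym x y : sg x y = sg y x.
Proof. by rewrite /sg mulrC -bt_even opprB. Qed.

Lemma sg_diag x : sg x x = - (mm x ^+ 2).
Proof. by rewrite /sg subrr bt0 addr0 expr2. Qed.

Lemma mm_lip2 x y : (mm x - mm y)^+2 <= 3 * `|x - y|.
Proof.
have /andP[b1 b2] := Bm_bnd x y.
have [/andP[mx1 mx2] _] := mm_bnd x.
have [/andP[my1 my2] /andP[dy1 dy2]] := mm_bnd y.
set u := mm x - mm y.
set d := x - y in b1 b2 *.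
have eB : mm x - mm y - dm y * d = u - dm y * d by [].
rewrite eB in b1 b2.
have u1 : -1 <= u <= 1 by rewrite /u; apply/andP; split; lra.
case/andP: u1 => u1 u2.
case: (lerP 0 d) => d0; [rewrite ger0_norm // | rewrite ltr0_norm //].
  case: (lerP d 1) => d1.
    have q1 : - d <= dm y * d <= d by apply/andP; split; nra.
    case/andP: q1 => q1 q2.
    have q3 : d^+2 <= d by nra.
    have q4 : 0 <= (3/2 * d - u) * (3/2 * d + u) by apply: mulr_ge0; lra.
    nra.
  nra.
case: (lerP (-1) d) => d1.
  have q1 : d <= dm y * d <= - d by apply/andP; split; nra.
  case/andP: q1 => q1 q2.
  have q3 : d^+2 <= - d by nra.
  have q4 : 0 <= (- 3/2 * d - u) * (- 3/2 * d + u) by apply: mulr_ge0; lra.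
  nra.
nra.
Qed.

Lemma sg_defect x y : sg x y <= (sg x x + sg y y)/2 + 9/2 * `|x - y|.
Proof.
rewrite !sg_diag /sg.
have h1 := mm_lip2 x y; have h2 := bt_le (x - y).
nra.
Qed.

End Kern.


Section Tang.
Variable R : realType.
Variables (g w : R -> R).
Hypothesis Hw : is_modulus w.
Hypothesis Hg : semi_convex_R w g.

Let w0 : forall t, 0 <= t -> 0 <= w t. Proof. by case: Hw. Qed.
Let wmon : forall s t, 0 <= s -> s <= t -> w s <= w t. Proof. by case: Hw => _ []. Qed.

Definition Ls a h := (g a - g (a - h)) / h.
Definition Rs a k := (g (a + k) - g a) / k.

Lemma LR a h k : 0 < h -> 0 < k -> Ls a h <= Rs a k + w (h + k).
Proof.
move=> h0 k0.
have hk : 0 < h + k by lra.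
have hk0 : h + k != 0 by rewrite gt_eqF.
set al := k / (h + k).
have a0 : 0 < al by rewrite /al divr_gt0.
have a1 : al < 1 by rewrite /al ltr_pdivrMr // mul1r; lra.
have H := Hg (a - h) (a + k) al a0 a1.
have e1 : al * (a - h) + (1 - al) * (a + k) = a by rewrite /al; field.
have e2 : `|a - h - (a + k)| = h + k.
  by rewrite (_ : a - h - (a + k) = - (h + k)); [rewrite normrN gtr0_norm | ring].
rewrite e1 e2 in H.
set G0 := g a in H *; set Gm := g (a - h) in H *; set Gp := g (a + k) in H *.
set W := w (h + k) in H *.
have H2 : (h + k) * G0 <= k * Gm + h * Gp + h * k * W.
  have e3 : (h + k) * (al * Gm + (1 - al) * Gp + al * (1 - al) * (h + k) * W) =
     k * Gm + h * Gp + h * k * W by rewrite /al; field.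
  by rewrite -e3 ler_pM2l.
rewrite /Ls /Rs -/G0 -/Gm -/Gp.
have e4 : (Gp - G0) / k + W = (h * (Gp - G0) + h * k * W) / (h * k).
  by field; repeat (apply/andP; split); rewrite gt_eqF.
have e5 : (G0 - Gm) / h = (k * (G0 - Gm)) / (h * k).
  by field; repeat (apply/andP; split); rewrite gt_eqF.
rewrite e4 e5 ler_pM2r ?invr_gt0 ?mulr_gt0 //.
lra.
Qed.

Definition Eset a := [set x | exists h, 0 < h /\ x = Ls a h - w (2 * h)].
Definition pp a := sup (Eset a).

Lemma Eset_ub a : ubound (Eset a) (Rs a 1 + w 2).
Proof.
move=> x [h [h0 ->]].
have H := @LR a h 1 h0 ltr01.
case: (lerP h 1) => h1.
  have : w (h + 1) <= w 2 by apply: wmon; lra.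
  have := w0 (2 * h) ltac:(lra).
  lra.
have : w (h + 1) <= w (2 * h) by apply: wmon; lra.
have := w0 2 ltac:(lra).
lra.
Qed.

Lemma Eset_ne a : Eset a !=set0.
Proof. by exists (Ls a 1 - w (2 * 1)); exists 1; split. Qed.

Lemma pp_left a h : 0 < h -> Ls a h - w (2 * h) <= pp a.
Proof.
move=> h0; apply: ub_le_sup; first by exists (Rs a 1 + w 2); exact: Eset_ub.
by exists h.
Qed.

Lemma pp_right a k : 0 < k -> pp a <= Rs a k + w (2 * k).
Proof.
move=> k0; apply: ge_sup; first exact: Eset_ne.
move=> x [h [h0 ->]].
have H := @LR a h k h0 k0.
case: (lerP h k) => hk.
  have : w (h + k) <= w (2 * k) by apply: wmon; lra.
  have := w0 (2 * h) ltac:(lra).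
  lra.
have : w (h + k) <= w (2 * h) by apply: wmon; lra.
have := w0 (2 * k) ltac:(lra).
lra.
Qed.

Lemma T1 a u : g a + pp a * (u - a) - `|u - a| * w (2 * `|u - a|) <= g u.
Proof.
case: (ltgtP u a) => ua.
- set h := a - u.
  have h0 : 0 < h by rewrite /h; lra.
  have H := @pp_left a h h0.
  have eu : u = a - h by rewrite /h; ring.
  rewrite ltr0_norm ?subr_lt0 // opprB -/h eu.
  move: H; rewrite /Ls.
  set Q := (g a - g (a - h)) / h => H.
  have eQ : g a - g (a - h) = Q * h by rewrite /Q; field; rewrite gt_eqF.
  have : 0 <= (pp a + w (2 * h) - Q) * h by apply: mulr_ge0; lra.
  nra.
- set k := u - a.
  have k0 : 0 < k by rewrite /k; lra.
  have H := @pp_right a k k0.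
  have eu : u = a + k by rewrite /k; ring.
  rewrite gtr0_norm ?subr_gt0 // -/k eu.
  move: H; rewrite /Rs.
  set Q := (g (a + k) - g a) / k => H.
  have eQ : g (a + k) - g a = Q * k by rewrite /Q; field; rewrite gt_eqF.
  have : 0 <= (Q + w (2 * k) - pp a) * k by apply: mulr_ge0; lra.
  nra.
- by rewrite ua subrr normr0 !mul0r mulr0 addr0 subr0.
Qed.


Lemma pp_mon a b : a <= b -> b <= a + 1/2 -> pp a - 2 * w 1 <= pp b.
Proof.
move=> ab ba.
have w1 := w0 1 ltac:(lra).
case: (eqVneq a b) => [->|nab]; first by lra.
have ab' : a < b by rewrite lt_neqAle nab.
set d := b - a.
have d0 : 0 < d by rewrite /d; lra.
have H1 := T1 a b; have H2 := T1 b a.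
rewrite -/d gtr0_norm // in H1.
rewrite (_ : a - b = - d) ?normrN ?gtr0_norm // in H2; last by rewrite /d; ring.
have wd : w (2 * d) <= w 1 by apply: wmon; rewrite /d; lra.
have : 0 <= (pp b - pp a + 2 * w (2 * d)) * d by nra.
rewrite pmulr_lge0 // => h.
lra.
Qed.

Lemma T2n (n : nat) : forall a u, `|u - a| <= n%:R / 2 ->
  g a + pp a * (u - a) - 2 * w 1 * n%:R * `|u - a| <= g u.
Proof.
have w1 := w0 1 ltac:(lra).
elim: n => [|n IH] a u.
  rewrite mul0r => h.
  have e : `|u - a| = 0 by apply/eqP; rewrite eq_le h normr_ge0.
  have : u - a = 0 by apply/eqP; rewrite -normr_eq0 e.
  move=> ua; have -> : u = a by lra.
  by rewrite subrr normr0 !mulr0 subr0 addr0.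
rewrite -natr1 => hn.
have nn : 0 <= n%:R :> R by [].
have H1 := T1 a u.
case: (lerP `|u - a| (1/2)) => hs.
  have hw : w (2 * `|u - a|) <= w 1 by apply: wmon; [rewrite pmulr_rge0 //|lra].
  have n0 := normr_ge0 (u - a).
  have k1 : `|u - a| * w (2 * `|u - a|) <= `|u - a| * w 1 by rewrite ler_wpM2l.
  have k2 : 0 <= `|u - a| * (w 1 * (2 * n%:R + 1)) by apply: mulr_ge0 => //; apply: mulr_ge0; lra.
  lra.
case: (lerP a u) => ua.
  rewrite ger0_norm ?subr_ge0 // in hs hn *.
  set v := a + 1/2.
  have IHv := IH v u ltac:(rewrite ger0_norm /v; lra).
  rewrite ger0_norm /v in IHv; last by lra.
  have Tv := T1 a v; rewrite /v in Tv.
  rewrite (_ : a + 1/2 - a = 1/2) in Tv; last by ring.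
  rewrite ger0_norm in Tv; last by lra.
  rewrite (_ : 2 * (1/2) = 1 :> R) in Tv; last by field.
  have Mv := @pp_mon a (a + 1/2) ltac:(lra) ltac:(lra).
  have : 0 <= (pp (a + 1/2) - pp a + 2 * w 1) * (u - (a + 1/2)) by apply: mulr_ge0; lra.
  nra.
rewrite ltr0_norm ?subr_lt0 // in hs hn *.
set v := a - 1/2.
have IHv := IH v u ltac:(rewrite ltr0_norm /v; lra).
rewrite ltr0_norm /v in IHv; last by lra.
have Tv := T1 a v; rewrite /v in Tv.
rewrite (_ : a - 1/2 - a = -(1/2)) in Tv; last by ring.
rewrite normrN ger0_norm in Tv; last by lra.
rewrite (_ : 2 * (1/2) = 1 :> R) in Tv; last by field.
have Mv := @pp_mon (a - 1/2) a ltac:(lra) ltac:(lra).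
have : 0 <= (pp a + 2 * w 1 - pp (a - 1/2)) * ((a - 1/2) - u) by apply: mulr_ge0; lra.
nra.
Qed.

Lemma T2 a u : g a + pp a * (u - a) - 2 * w 1 * (2 * `|u - a| + 1) * `|u - a| <= g u.
Proof.
have w1 := w0 1 ltac:(lra).
set x := 2 * `|u - a|.
have x0 : 0 <= x by rewrite /x mulr_ge0 // normr_ge0.
have /andP[t1 t2] := truncn_itv x0.
set n := (Num.truncn x).+1.
have hn : `|u - a| <= n%:R / 2 by rewrite /n; move: t2; rewrite /x; lra.
have H := @T2n n a u hn.
have nle : n%:R <= x + 1 by rewrite /n -natr1; lra.
have : 0 <= 2 * w 1 * (x + 1 - n%:R) * `|u - a|.
  by apply: mulr_ge0; [apply: mulr_ge0; lra | exact: normr_ge0].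
lra.
Qed.

End Tang.


Section Cvx.
Variable R : realType.

Lemma cv_ext (f h : R -> R) : (forall x, f x = h x) -> convex_fun_R f -> convex_fun_R h.
Proof. by move=> e cf x y a a0 a1; rewrite -!e; apply: cf. Qed.

Lemma cv_add (f h : R -> R) : convex_fun_R f -> convex_fun_R h ->
  convex_fun_R (fun x => f x + h x).
Proof.
move=> cf ch x y a a0 a1; have := cf x y a a0 a1; have := ch x y a a0 a1; lra.
Qed.

Lemma cv_aff (c d : R) : convex_fun_R (fun x => c * x + d).
Proof. move=> x y a _ _; rewrite le_eqVlt; apply/orP; left; apply/eqP; ring. Qed.

Lemma cv_scale (f : R -> R) (c b r : R) : 0 <= c -> 0 < r -> convex_fun_R f ->
  convex_fun_R (fun x => c * f ((x - b) / r)).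
Proof.
move=> c0 r0 cf x y a a0 a1 /=.
have e : (a * x + (1 - a) * y - b) / r = a * ((x - b) / r) + (1 - a) * ((y - b) / r).
  by field; rewrite gt_eqF.
rewrite e; have := cf ((x - b) / r) ((y - b) / r) a a0 a1 => H.
have := ler_wpM2l c0 H; lra.
Qed.

Lemma cv_sum (N : nat) (F : nat -> R -> R) : (forall n, convex_fun_R (F n)) ->
  convex_fun_R (fun x => \sum_(n < N) F n x).
Proof.
move=> cF; elim: N => [|N IH].
  by move=> x y a _ _; rewrite !big_ord0; lra.
apply: (@cv_ext (fun x => \sum_(n < N) F n x + F N x)).
  by move=> x; rewrite big_ord_recr.
exact: cv_add.
Qed.

Lemma rr_ge (N : nat) : (N.+1)%:R * rr R N <= 1.
Proof.
elim: N => [|N IH]; first by rewrite rr0 mulr1.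
rewrite rrS -natr1.
have := rr_gt0 R N; have := rr_le1 R N.
nra.
Qed.

Lemma rr_idx (N : nat) (s : R) : rr R N < s -> s <= rr R 1 ->
  exists k, (k.+1 < N)%N /\ rr R k.+2 < s <= rr R k.+1.
Proof.
elim: N => [|N IH] h1 h2.
  by rewrite rr0 rrS rr0 in h1 h2; lra.
case: (ltP (rr R N) s) => hN.
  by have [k [kN hk]] := IH hN h2; exists k; split => //; apply: ltn_trans kN _.
case: N IH h1 hN => [|N] IH h1 hN.
  by rewrite rrS rr0 in h1 h2; lra.
by exists N; split => //; apply/andP; split.
Qed.

End Cvx.

Section Main.
Variable R : realType.
Variables (g w : R -> R).
Hypothesis Hw : is_modulus w.
Hypothesis Hg : semi_convex_R w g.
Variable S : R.
Hypothesis HS : forall N, \sum_(n < N) w (rr R n) <= S.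

Let w0 : forall t, 0 <= t -> 0 <= w t. Proof. by case: Hw. Qed.
Let wmon : forall s t, 0 <= s -> s <= t -> w s <= w t. Proof. by case: Hw => _ []. Qed.

Definition mu n := 16 * w (rr R n).
Definition Lam := 8 * w 1.
Definition psi N (X Y : R) := - (Lam * X * Y) +
  \sum_(n < N) mu n * rr R n * sg R (X / rr R n) (Y / rr R n).
Definition Phi a N (x y : R) :=
  g a - rr R N * w 2 + pp R g w a * ((x + y) / 2 - a) + psi N (x - a) (y - a).

Lemma mu_ge0 n : 0 <= mu n.
Proof. by rewrite /mu mulr_ge0 // w0 // ltW // rr_gt0. Qed.

Lemma Phi_sym a N x y : Phi a N x y = Phi a N y x.
Proof.
rewrite /Phi /psi (addrC x y); congr (_ + (_ + _)).
  by rewrite mulrAC.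
by apply: eq_bigr => n _; rewrite sg_sym.
Qed.

Lemma Phi_convex a N y : convex_fun_R (fun x => Phi a N x y).
Proof.
pose A := fun x => (pp R g w a / 2 - Lam * (y - a)) * x +
    (g a - rr R N * w 2 + pp R g w a * (y / 2 - a) + Lam * a * (y - a)).
pose G := fun n x => (mu n * rr R n) * sg R ((x - a) / rr R n) ((y - a) / rr R n).
pose B := fun x => \sum_(n < N) G n x.
have eF : forall x, A x + B x = Phi a N x y.
  by move=> x; rewrite /A /B /G /Phi /psi; ring.
apply: (@cv_ext R (fun x => A x + B x) _ eF).
apply: (@cv_add R A B); first exact: cv_aff.
apply: (@cv_sum R N G) => n.
apply: (@cv_scale R (fun s => sg R s ((y - a) / rr R n)) (mu n * rr R n) a (rr R n)).
- by rewrite mulr_ge0 ?mu_ge0 // ltW // rr_gt0.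
- exact: rr_gt0.
- exact: sg_convex.
Qed.

Lemma psi_defect N X Y : psi N X Y <= (psi N X X + psi N Y Y) / 2 +
  Lam * (X - Y)^+2 / 2 + 9/2 * `|X - Y| * \sum_(n < N) mu n.
Proof.
rewrite /psi.
set s1 := \sum_(n < N) _.
set s2 := \sum_(n < N) _.
set s3 := \sum_(n < N) _.
have : s1 <= (s2 + s3) / 2 + 9/2 * `|X - Y| * \sum_(n < N) mu n.
  rewrite /s1 /s2 /s3 -big_split /= mulr_suml mulr_sumr -big_split /=.
  apply: ler_sum => n _.
  have r0 := rr_gt0 R n.
  have H := @sg_defect R (X / rr R n) (Y / rr R n).
  have e : `|X / rr R n - Y / rr R n| = `|X - Y| / rr R n.
    by rewrite -mulrBl normrM [`|(rr R n)^-1|]gtr0_norm // invr_gt0.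
  rewrite e in H.
  have H2 := ler_wpM2l (mulr_ge0 (mu_ge0 n) (ltW r0)) H.
  have e2 : mu n * rr R n * (9 / 2 * (`|X - Y| / rr R n)) = 9/2 * `|X - Y| * mu n.
    by field; rewrite gt_eqF.
  have e3 : mu n * rr R n * ((sg R (X / rr R n) (X / rr R n) + sg R (Y / rr R n) (Y / rr R n)) / 2 + 9 / 2 * (`|X - Y| / rr R n)) = (mu n * rr R n * sg R (X / rr R n) (X / rr R n) + mu n * rr R n * sg R (Y / rr R n) (Y / rr R n)) / 2 + 9 / 2 * `|X - Y| * mu n by rewrite -e2; ring.
  by rewrite e3 in H2.
move=> H; lra.
Qed.


Lemma sum_ge_term N (F : nat -> R) k : (k < N)%N -> (forall n, 0 <= F n) ->
  F k <= \sum_(n < N) F n.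
Proof.
move=> kN F0; rewrite (bigD1 (Ordinal kN)) //= lerDl.
by apply: sumr_ge0 => i _.
Qed.

Lemma psi_diag N t : psi N t t =
  - (Lam * t^+2) - \sum_(n < N) mu n * rr R n * mm R (t / rr R n) ^+ 2.
Proof.
rewrite /psi expr2 mulrA; congr (_ + _).
rewrite -sumrN; apply: eq_bigr => n _; rewrite sg_diag; ring.
Qed.

Lemma Phi_minor a N u : Phi a N u u <= g u.
Proof.
have w1 := w0 1 ltac:(lra).
have w2 := w0 2 ltac:(lra).
set t := u - a.
have eP : Phi a N u u = g a - rr R N * w 2 + pp R g w a * t + psi N t t.
  by rewrite /Phi /t; congr (_ + _ * _ + _); field.
rewrite eP psi_diag.
set F := fun n => mu n * rr R n * mm R (t / rr R n) ^+ 2.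
have F0 : forall n, 0 <= F n.
  by move=> n; rewrite /F; apply: mulr_ge0; [apply: mulr_ge0; [exact: mu_ge0| exact: ltW (rr_gt0 R n)] | exact: sqr_ge0].
set Q := \sum_(n < N) _.
have QF : Q = \sum_(n < N) F n by [].
have Q0 : 0 <= Q by rewrite QF; apply: sumr_ge0 => n _.
have rN := rr_gt0 R N; have rN1 := rr_le1 R N.
have nt := normr_ge0 t.
have tt : t ^+ 2 = `|t| ^+ 2 by rewrite real_normK // num_real.
case: (lerP (1/2) `|t|) => ht.
  have H := @T2 R g w Hw Hg a u; rewrite -/t in H.
  rewrite /Lam tt.
  have : 0 <= w 1 * (`|t| * (2 * `|t| - 1)) by apply: mulr_ge0 => //; apply: mulr_ge0; lra.
  nra.
have H := @T1 R g w Hw Hg a u; rewrite -/t in H.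
case: (lerP `|t| (rr R N)) => htN.
  have : w (2 * `|t|) <= w 2 by apply: wmon; lra.
  have : `|t| * w (2 * `|t|) <= rr R N * w 2.
    apply: ler_pM => //; first by apply: w0; lra.
    by apply: wmon; lra.
  move=> k1 _.
  have : 0 <= Lam * t^+2 by rewrite /Lam tt; apply: mulr_ge0; [lra|exact: sqr_ge0].
  lra.
have h1 : `|t| <= rr R 1 by rewrite rrS rr0; lra.
have [k [kN /andP[hk1 hk2]]] := @rr_idx R N `|t| htN h1.
have rk := rr_gt0 R k.
have e1 : rr R k.+1 = rr R k / 2 by exact: rrS.
have e2 : rr R k.+2 = rr R k / 4 by rewrite rrS rrS; field.
rewrite e1 in hk2; rewrite e2 in hk1.
have Fk : F k <= Q by rewrite QF; apply: sum_ge_term => //; exact: ltnW.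
have /andP[ta tb] : - rr R k <= t <= rr R k by rewrite -ler_norml; lra.
have sq : (t / rr R k)^+2 / 4 <= mm R (t / rr R k) ^+ 2.
  apply: mm_sq; apply/andP; split.
    by rewrite ler_pdivlMr //; lra.
  by rewrite ler_pdivrMr //; lra.
have wk := w0 (rr R k) (ltW rk).
have Fk2 : mu k * rr R k * ((t / rr R k)^+2 / 4) <= F k.
  by rewrite /F; apply: ler_wpM2l => //; apply: mulr_ge0; [exact: mu_ge0 | exact: ltW].
have e3 : mu k * rr R k * ((t / rr R k)^+2 / 4) = 4 * w (rr R k) * t^+2 / rr R k.
  by rewrite /mu; field; rewrite gt_eqF.
rewrite e3 in Fk2.
have k4 : `|t| * w (rr R k) <= 4 * w (rr R k) * t^+2 / rr R k.
  rewrite ler_pdivlMr // tt.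
  have : 0 <= w (rr R k) * `|t| * (4 * `|t| - rr R k) by apply: mulr_ge0; [apply: mulr_ge0|lra].
  nra.
have k5 : `|t| * w (2 * `|t|) <= `|t| * w (rr R k).
  by apply: ler_wpM2l => //; apply: wmon; lra.
have : 0 <= Lam * t^+2 by rewrite /Lam tt; apply: mulr_ge0; [lra|exact: sqr_ge0].
have : 0 <= rr R N * w 2 by apply: mulr_ge0; lra.
lra.
Qed.

Definition Eval x y := [set z | exists a N, z = Phi a N x y].
Definition ff x y := sup (Eval x y).
Definition Bd x y := (g x + g y)/2 + Lam * (x - y)^+2 / 2 + 9/2 * `|x - y| * (16 * S).

Lemma Phi_bound a N x y : Phi a N x y <= Bd x y.
Proof.
have hx := Phi_minor a N x; have hy := Phi_minor a N y.
have D := psi_defect N (x - a) (y - a).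
have e1 : x - a - (y - a) = x - y by ring.
rewrite e1 in D.
have sm : \sum_(n < N) mu n <= 16 * S.
  by rewrite /mu -mulr_sumr; apply: ler_wpM2l; [lra | exact: HS].
have nxy := normr_ge0 (x - y).
have sm2 : 9/2 * `|x - y| * \sum_(n < N) mu n <= 9/2 * `|x - y| * (16 * S).
  by apply: ler_wpM2l => //; apply: mulr_ge0 => //; lra.
rewrite /Phi in hx hy *; rewrite /Bd.
set p := pp R g w a in hx hy *.
have e : p * ((x + y) / 2 - a) = (p * ((x + x) / 2 - a) + p * ((y + y) / 2 - a)) / 2 by field.
rewrite e.
lra.
Qed.

Lemma Eval_ub x y : has_ubound (Eval x y).
Proof. by exists (Bd x y) => z [a [N ->]]; exact: Phi_bound. Qed.

Lemma Eval_ne x y : Eval x y !=set0.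
Proof. by exists (Phi 0 0 x y); exists 0, 0%N. Qed.

Lemma ff_ge a N x y : Phi a N x y <= ff x y.
Proof. by apply: ub_le_sup; [exact: Eval_ub | exists a, N]. Qed.

Lemma ff_le x y B : (forall a N, Phi a N x y <= B) -> ff x y <= B.
Proof. by move=> hB; apply: ge_sup; [exact: Eval_ne | move=> z [a [N ->]]]. Qed.

Lemma ff_sym x y : ff x y = ff y x.
Proof.
rewrite /ff; congr sup; apply/seteqP; split => z [a [N ->]]; exists a, N; exact: Phi_sym.
Qed.

Lemma ff_convex y : convex_fun_R (fun x => ff x y).
Proof.
move=> x1 x2 al a0 a1; apply: ff_le => a N.
have H := Phi_convex a N y x1 x2 al a0 a1.
have h1 := ff_ge a N x1 y; have h2 := ff_ge a N x2 y.
have k1 := ler_wpM2l (ltW a0) h1.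
have k2 := ler_wpM2l (ltW (ltac:(lra) : 0 < 1 - al)) h2.
lra.
Qed.

Lemma psi00 N : psi N 0 0 = 0.
Proof.
rewrite psi_diag expr0n /= mulr0 oppr0 add0r big1 ?oppr0 // => n _.
by rewrite mul0r mm0 expr0n /= mulr0.
Qed.

Lemma ff_diag u : ff u u = g u.
Proof.
apply/eqP; rewrite eq_le; apply/andP; split.
  by apply: ff_le => a N; exact: Phi_minor.
rewrite leNgt; apply/negP => hlt.
set e := g u - ff u u.
have e0 : 0 < e by rewrite /e; lra.
have w2 := w0 2 ltac:(lra).
have x0 : 0 <= w 2 / e by apply: divr_ge0; lra.
have /andP[_ t2] := truncn_itv x0.
set N := Num.truncn (w 2 / e).
have h := ff_ge u N u u.
have eP : Phi u N u u = g u - rr R N * w 2.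
  by rewrite /Phi subrr psi00 (_ : (u + u) / 2 - u = 0) ?mulr0 ?addr0 //; field.
rewrite eP in h.
have hN := rr_ge R N.
rewrite -/N in t2.
have : w 2 < (N.+1)%:R * e by rewrite -ltr_pdivrMr.
have rN := rr_gt0 R N.
move=> hw.
have k1 : rr R N * w 2 < rr R N * ((N.+1)%:R * e) by rewrite ltr_pM2l.
have k2 : ((N.+1)%:R * rr R N) * e <= 1 * e by rewrite ler_pM2r.
have e3 : rr R N * ((N.+1)%:R * e) = ((N.+1)%:R * rr R N) * e by ring.
rewrite /e in e0 k1 k2 e3.
lra.
Qed.

Lemma main_ex : exists f : R -> R -> R, separately_convex2 f /\ (forall u, f u u = g u).
Proof.
exists ff; split; last exact: ff_diag.
split; first exact: ff_convex.
move=> x; apply: (@cv_ext R (fun y => ff y x)); first by move=> y; rewrite ff_sym.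
exact: ff_convex.
Qed.

End Main.

Theorem theorem1p2 (R : realType) (g omega : R -> R) :
  is_modulus omega ->
  semi_convex_R omega g ->
  (\int[lebesgue_measure]_(t in `]0%R, 1%R]) ((omega t / t)%:E) < +oo)%E ->
  exists f : R -> R -> R, separately_convex2 f /\ (forall u : R, f u u = g u).
Proof.
move=> Hw Hg Hint.
have [S HS] := @dini R omega Hw Hint.
exact: (@main_ex R g omega Hw Hg S HS).
Qed.
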